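(* Let $1<p\le\infty$ and $m\in\mathbb N_0$. Let $\varphi\in C_0^k(\mathbb R)$ with $\operatorname{supp}\varphi\subset[0,1]$, $\varphi>0$ on $(0,1)$, and $k>\frac{mp}{p-1}+1$ (read as $k>m+1$ if $p=\infty$), and assume that $\varphi^{(k)}$ has only finitely many zeros in $[0,1]$. Then for all $0\le n\le m$, $$\frac{|\varphi^{(n)}(t)|}{|\varphi(t)|^{1/p}}\in L_\infty([0,1]).$$
   Context: $C_0^k(\mathbb R)$: compactly supported functions whose derivatives up to order $k$ are uniformly continuous. *)

(* Defs.v *)
From HB Require Import structures.
From mathcomp Require Import all_boot all_order all_algebra.
From mathcomp Require Import all_classical all_reals all_analysis.
Set Implicit Arguments. Unset Strict Implicit. Unset Printing Implicit Defensive.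
Import Order.TTheory GRing.Theory Num.Theory.
Import numFieldNormedType.Exports.
Local Open Scope classical_set_scope.
Local Open Scope ring_scope.

Definition nderiv {R : realType} (n : nat) (f : R -> R) : R -> R :=
  derive1n n f.

Definition supp {R : realType} (f : R -> R) : set R :=
  closure [set x | f x != 0].

Definition C0k {R : realType} (k : nat) (f : R -> R) : Prop :=
  compact (supp f) /\
  (forall j : nat, (j < k)%N -> forall x : R, derivable (nderiv j f) x 1) /\
  (forall j : nat, (j <= k)%N -> unif_continuous (nderiv j f)).

Definition inv_exponent {R : realType} (p : \bar R) : R :=
  match p with
  | EFin r => r^-1
  | _ => 0
  end.

Definition k_condition {R : realType} (k m : nat) (p : \bar R) : Prop :=
  match p with
  | EFin r => (m%:R * r / (r - 1) + 1 < k%:R :> R)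
  | _ => (m.+1 < k)%N
  end.

Definition Linfty01 {R : realType} (g : R -> R) : Prop :=
  measurable_fun (`[0%R, 1%R]%classic : set R) g /\
  exists C : R, {ae (@lebesgue_measure R), forall t, (`[0%R, 1%R]%classic : set R) t -> `|g t| <= C}.

(* Main.v *)
Require Import Defs.
From HB Require Import structures.
From mathcomp Require Import all_boot all_order all_algebra.
From mathcomp Require Import all_classical all_reals all_analysis.
Import Order.TTheory GRing.Theory Num.Theory.
Import numFieldNormedType.Exports.
Local Open Scope classical_set_scope.
Local Open Scope ring_scope.
From mathcomp Require Import ring lra.

Section S.
Context {R : realType}.

Lemma isd_cont (f : R -> R) (df : R -> R) :
  (forall x : R, is_derive x 1 f (df x)) -> continuous f.
Proof.
move=> hd x; have /derivable1_diffP := (@ex_derive _ _ _ _ _ _ _ (hd x)).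
exact: differentiable_continuous.
Qed.

Lemma mvt_le (f df : R -> R) (a b L : R) :
  (forall x : R, is_derive x 1 f (df x)) -> a <= b ->
  (forall x, a <= x <= b -> df x <= L) -> f b - f a <= L * (b - a).
Proof.
move=> hd; rewrite le_eqVlt => /orP[/eqP->|ab] hL; first by rewrite !subrr mulr0.
have [c /andP[c1 c2] ->] := MVT ab (fun x _ => hd x) (continuous_subspaceT (@isd_cont f df hd)).
apply: ler_wpM2r; first by rewrite subr_ge0 ltW.
by apply: hL; rewrite bnd_simp in c1 c2; rewrite !ltW.
Qed.

Lemma mvt_ge (f df : R -> R) (a b L : R) :
  (forall x : R, is_derive x 1 f (df x)) -> a <= b ->
  (forall x, a <= x <= b -> L <= df x) -> L * (b - a) <= f b - f a.
Proof.
move=> hd; rewrite le_eqVlt => /orP[/eqP->|ab] hL; first by rewrite !subrr mulr0.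
have [c /andP[c1 c2] ->] := MVT ab (fun x _ => hd x) (continuous_subspaceT (@isd_cont f df hd)).
apply: ler_wpM2r; first by rewrite subr_ge0 ltW.
by apply: hL; rewrite bnd_simp in c1 c2; rewrite !ltW.
Qed.
End S.

Section Core.
Variable R : realType.
Variables (F : nat -> R -> R) (K : nat) (d : R).
Hypothesis hd : forall j (x : R), (j < K)%N -> is_derive x 1 (F j) (F j.+1 x).
Hypothesis hpos : forall j x, (j <= K)%N -> 0 <= x <= d -> 0 <= F j x.
Hypothesis hmono : forall j x y, (j <= K)%N -> 0 <= x -> x <= y -> y <= d -> F j x <= F j y.
Hypothesis h0 : forall j, (j <= K)%N -> F j 0 = 0.

Lemma lowerF j : (j <= K)%N -> forall y e, 0 <= y -> 0 < e -> y + j%:R * e <= d ->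
  F j y * e ^+ j <= F 0 (y + j%:R * e).
Proof.
elim: j => [|j IH] jK y e y0 e0 hy; first by rewrite mul0r addr0 expr0 mulr1.
have jK' : (j <= K)%N by apply: ltnW.
have ye : y + e + j%:R * e = y + j.+1%:R * e by rewrite -addn1 natrD; ring.
have hy' : y + e + j%:R * e <= d by rewrite ye.
have Hs : F j.+1 y * ((y + e) - y) <= F j (y + e) - F j y.
  apply: (mvt_ge _ _ _ _ _ (fun x => hd j x jK)); first by rewrite lerDl ltW.
  move=> x /andP[x1 x2]; apply: hmono => //.
  have : e <= j.+1%:R * e by apply: ler_peMl; [exact: ltW | rewrite ler1n].
  by move: x2 hy; lra.
have hFj : 0 <= F j y.
  apply: hpos => //; rewrite y0 /=; apply: le_trans hy.
  by rewrite lerDl mulr_ge0 // ltW.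
rewrite addrC addKr in Hs.
have := IH jK' (y + e) e (addr_ge0 y0 (ltW e0)) e0 hy'.
rewrite ye => H; apply: le_trans H.
rewrite exprS mulrA; apply: ler_wpM2r; first by rewrite exprn_ge0 // ltW.
by move: Hs hFj; lra.
Qed.

Lemma upper0 r : (r <= K)%N -> forall x, 0 <= x <= d -> F (K - r) x <= F K d * x ^+ r.
Proof.
elim: r => [|r IH] rK x /andP[x0 xd].
  by rewrite subn0 expr0 mulr1; apply: hmono.
have rK' : (r <= K)%N by apply: ltnW.
have iK : (K - r.+1 < K)%N by rewrite ltn_subrL (leq_trans _ rK).
have hi : (K - r.+1).+1 = (K - r)%N by rewrite subnSK.
have M0 : 0 <= F K d by apply: hpos => //; rewrite (le_trans x0 xd) lexx.
have := @mvt_le _ (F (K - r.+1)) (F (K - r.+1).+1) 0 x (F K d * x ^+ r)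
  (fun z => hd _ z iK) x0.
rewrite h0 ?(ltnW iK) // subr0 subr0 hi -mulrA -exprSr => H; apply: H.
move=> z /andP[z0 zx]; apply: le_trans (IH rK' z _) _; first by rewrite z0 (le_trans zx).
by apply: ler_wpM2l => //; apply: lerXn2r; rewrite ?nnegrE // (le_trans z0).
Qed.

Lemma upperV (hK : (0 < K)%N) r : (r <= K)%N -> forall t h x, 0 < h -> h <= t -> t <= d ->
  t - h <= x <= t ->
  F (K - r) x <= r%:R * (K%:R ^+ K * F 0 t * h^-1 ^+ (K - r)) + F K d * h ^+ r.
Proof.
have t0F t : 0 <= t -> t <= d -> 0 <= F 0 t by move=> ? ?; apply: hpos => //; apply/andP.
elim: r => [|r IH] rK t h x h0' ht td /andP[x1 x2].
  rewrite subn0 mul0r add0r expr0 mulr1; apply: hmono => //; last by rewrite (le_trans x2).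
  by apply: le_trans x1; rewrite subr_ge0.
have rK' : (r <= K)%N by apply: ltnW.
have iK : (K - r.+1 < K)%N by rewrite ltn_subrL (leq_trans _ rK).
have hi : (K - r.+1).+1 = (K - r)%N by rewrite subnSK.
have t0 : 0 <= t by apply: le_trans ht; apply: ltW.
have M0 : 0 <= F K d by apply: hpos => //; rewrite (le_trans t0 td) lexx.
have Ft0 := t0F t t0 td.
set i := (K - r.+1)%N in iK hi *.
set P := K%:R ^+ K * F 0 t.
have P0 : 0 <= P by rewrite mulr_ge0 // exprn_ge0.
have hV0 : 0 <= h^-1 by rewrite invr_ge0 ltW.
set L := r%:R * (P * h^-1 ^+ (K - r)) + F K d * h ^+ r.
have L0 : 0 <= L.
  apply: addr_ge0; [apply: mulr_ge0; [exact: ler0n| apply: mulr_ge0 => //; exact: exprn_ge0] | apply: mulr_ge0 => //; apply: exprn_ge0; exact: ltW].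
have := @mvt_le _ (F i) (F i.+1) (t - h) x L (fun z => hd _ z iK) x1.
rewrite hi => /(_ _)/wrap[].
  move=> z /andP[z1 z2]; apply: IH => //; rewrite z1 /=; exact: le_trans x2.
move=> Hm.
have hxs : L * (x - (t - h)) <= L * h by apply: ler_wpM2l => //; lra.
have KR : (0 < K%:R :> R) by rewrite ltr0n.
have hK0 : 0 < h / K%:R by rewrite divr_gt0.
have Hlow := @lowerF i (ltnW iK) (t - h) (h / K%:R) _ hK0 _.
have iKR : (i%:R <= K%:R :> R) by rewrite ler_nat ltnW.
have ihK : i%:R * (h / K%:R) <= h.
  by rewrite mulrA ler_pdivrMr // mulrC ler_wpM2l // ltW.
have ihK0 : 0 <= i%:R * (h / K%:R) by rewrite mulr_ge0 // ltW.
have Hlow' : F i (t - h) * (h / K%:R) ^+ i <= F 0 t.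
  apply: le_trans (Hlow _ _) _; [by rewrite subr_ge0 | by lra |].
  apply: hmono => //; [by lra | by lra].
have Fis : F i (t - h) <= P * h^-1 ^+ i.
  have hKi : 0 < (h / K%:R) ^+ i by rewrite exprn_gt0.
  rewrite -ler_pdivlMr // in Hlow'; apply: le_trans Hlow' _.
  rewrite -exprVn invf_div exprMn /P mulrC mulrAC.
  apply: ler_wpM2r; first exact: exprn_ge0.
  apply: ler_wpM2r => //; apply: ler_weXn2l; first by rewrite ler1n.
  by rewrite /i leq_subr.
have eqA : h^-1 ^+ (K - r) * h = h^-1 ^+ i.
  by rewrite -hi exprSr divfK // gt_eqF.
have eqL : L * h = r%:R * (P * h^-1 ^+ i) + F K d * h ^+ r.+1.
  by rewrite /L mulrDl exprSr -!mulrA eqA.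
have -> : r.+1%:R = r%:R + 1 :> R by rewrite -addn1 natrD.
move: Hm hxs Fis; rewrite eqL; lra.
Qed.

Lemma core_est (hK : (0 < K)%N) n (nK : (n < K)%N) (a : R) :
  0 <= a -> a * K%:R <= (K - n)%:R ->
  exists C, forall t, 0 < t <= d -> 0 < F 0 t -> F n t <= C * F 0 t `^ a.
Proof.
move=> a0 aK.
set M := F K d; set mu := M + 1.
have KR : (0 < K%:R :> R) by rewrite ltr0n.
exists (((K - n)%:R * (K%:R ^+ K * mu ^+ n) + M) * F 0 d `^ ((K - n)%:R / K%:R - a)).
move=> t /andP[t0 td] F0t.
have M0 : 0 <= M by apply: hpos => //; rewrite (le_trans (ltW t0) td) lexx.
have mu1 : 1 <= mu by rewrite /mu lerDr.
have mu0 : 0 < mu by apply: lt_le_trans mu1.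
set u := F 0 t `^ (K%:R^-1).
have u0 : 0 < u by apply: powR_gt0.
have uK : u ^+ K = F 0 t.
  by rewrite /u -powR_mulrn ?powR_ge0 // -powRrM mulVf ?gt_eqF // powRr1 // ltW.
set h := u / mu.
have h0' : 0 < h by apply: divr_gt0.
have Fup := @upper0 K (leqnn K) t.
rewrite subnn -/M in Fup.
have Fup' : F 0 t <= M * t ^+ K by apply: Fup; rewrite (ltW t0).
have ht : h <= t.
  rewrite -(ler_pXn2r hK); [|by rewrite nnegrE ltW|by rewrite nnegrE ltW].
  rewrite /h exprMn uK exprVn.
  rewrite ler_pdivrMr ?exprn_gt0 //; apply: le_trans Fup' _.
  rewrite mulrC; apply: ler_wpM2l; first by apply: exprn_ge0; apply: ltW.
  apply: le_trans (_ : mu <= mu ^+ K); first by rewrite /mu lerDl.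
  by rewrite -{1}(expr1 mu) ler_weXn2l.
have HV := @upperV hK (K - n) (leq_subr _ _) t h t h0' ht td.
rewrite subKn in HV; last exact: ltnW nK.
have HV' : F n t <= (K - n)%:R * (K%:R ^+ K * F 0 t * h^-1 ^+ n) + M * h ^+ (K - n).
  by apply: HV; rewrite lexx andbT lerBlDr lerDl; apply: ltW.
set th := (K - n)%:R / K%:R.
have uKn : u ^+ (K - n) = F 0 t `^ th.
  by rewrite /u -powR_mulrn ?powR_ge0 // -powRrM mulrC.
have e1 : F 0 t * h^-1 ^+ n = mu ^+ n * u ^+ (K - n).
  rewrite -uK /h invf_div exprMn exprVn -{1}(subnK (ltnW nK)) exprD.
  rewrite -mulrA (mulrC (u ^+ n)) divfK; first by rewrite mulrC.
  by rewrite expf_neq0 // gt_eqF.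
have e2 : M * h ^+ (K - n) <= M * u ^+ (K - n).
  apply: ler_wpM2l => //; apply: lerXn2r; rewrite ?nnegrE; try by apply: ltW.
  by rewrite /h ler_pdivrMr // ler_peMr //; apply: ltW.
have HF : F n t <= ((K - n)%:R * (K%:R ^+ K * mu ^+ n) + M) * F 0 t `^ th.
  apply: le_trans HV' _; rewrite -mulrA e1 -uKn mulrDl -!mulrA.
  by rewrite lerD2l.
apply: le_trans HF _.
have thA : th = a + (th - a) by rewrite addrC subrK.
rewrite {1}thA powRD; last by rewrite (gt_eqF F0t) implybT.
rewrite -mulrA; apply: ler_wpM2l.
  apply: addr_ge0 => //; apply: mulr_ge0 => //; apply: mulr_ge0; apply: exprn_ge0 => //.
  by apply: ltW.
rewrite mulrC; apply: ler_wpM2r; first exact: powR_ge0.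
apply: ge0_ler_powR; rewrite ?nnegrE.
- by rewrite subr_ge0 /th ler_pdivlMr.
- by apply: ltW.
- by apply: hpos => //; rewrite (le_trans (ltW t0) td) lexx.
- by apply: hmono => //; apply: ltW.
Qed.
End Core.

Section End.
Context {R : realType}.
Variables (F : nat -> R -> R) (k : nat).
Hypothesis hd : forall j (x : R), (j < k)%N -> is_derive x 1 (F j) (F j.+1 x).
Hypothesis hc : continuous (F k).
Hypothesis hz : forall x, x < 0 -> F 0 x = 0.

Lemma Fneg j : (j <= k)%N -> forall x, x < 0 -> F j x = 0.
Proof.
elim: j => [_|j IH jk] x x0; first exact: hz.
have Hn : \near x, F j x = (fun _ : R => (0:R)) x.
  near=> y; apply: IH; [exact: ltnW | near: y; exact: lt_nbhsl].
have H1 := near_eq_is_derive Hn (hd j x jk).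
have := @derive_val _ _ _ _ _ _ _ H1.
by rewrite (derive_cst (0:R)).
Unshelve. all: by end_near.
Qed.

Lemma Fcont j : (j <= k)%N -> continuous (F j).
Proof.
rewrite leq_eqVlt => /orP[/eqP->//|jk].
exact: (@isd_cont _ (F j) (F j.+1) (fun x => hd j x jk)).
Qed.

Lemma Fzero j : (j <= k)%N -> F j 0 = 0.
Proof.
move=> jk.
have H1 : (F j y @[y --> (0:R)^'-] --> F j 0) by apply: cvg_at_left_filter; exact: Fcont.
have Hn : \forall y \near (0:R)^'-, (fun _ : R => (0:R)) y = F j y.
  by apply: filterS (nbhs_left_lt (0:R)) => y y0; apply/esym/Fneg.
have H2 : (F j y @[y --> (0:R)^'-] --> (0:R)).
  exact: cvg_trans (near_eq_cvg Hn) (cvg_cst (0:R)).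
exact: (cvg_unique _ H1 H2).
Qed.

Lemma pos_prop y : (forall z, 0 <= z <= y -> 0 <= F k z) ->
  forall j, (j <= k)%N -> forall z, 0 <= z <= y -> 0 <= F j z.
Proof.
move=> Hk.
suff H r : (r <= k)%N -> forall z, 0 <= z <= y -> 0 <= F (k - r) z.
  by move=> j jk; have := H (k - j)%N (leq_subr _ _); rewrite subKn.
elim: r => [|r IH] rk z; first by rewrite subn0; exact: Hk.
move=> /andP[z0 zy].
have ik : (k - r.+1 < k)%N by rewrite ltn_subrL (leq_trans _ rk).
have hi : (k - r.+1).+1 = (k - r)%N by rewrite subnSK.
have := @mvt_ge _ (F (k - r.+1)) (F (k - r.+1).+1) 0 z 0 (fun w => hd _ w ik) z0.
rewrite mul0r Fzero ?(ltnW ik) // subr0 hi; apply.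
move=> w /andP[w0 wz]; apply: IH; [exact: ltnW | by rewrite w0 (le_trans wz)].
Qed.

Lemma neg_prop y : (forall z, 0 <= z <= y -> F k z <= 0) ->
  forall j, (j <= k)%N -> forall z, 0 <= z <= y -> F j z <= 0.
Proof.
move=> Hk.
suff H r : (r <= k)%N -> forall z, 0 <= z <= y -> F (k - r) z <= 0.
  by move=> j jk; have := H (k - j)%N (leq_subr _ _); rewrite subKn.
elim: r => [|r IH] rk z; first by rewrite subn0; exact: Hk.
move=> /andP[z0 zy].
have ik : (k - r.+1 < k)%N by rewrite ltn_subrL (leq_trans _ rk).
have hi : (k - r.+1).+1 = (k - r)%N by rewrite subnSK.
have := @mvt_le _ (F (k - r.+1)) (F (k - r.+1).+1) 0 z 0 (fun w => hd _ w ik) z0.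
rewrite mul0r Fzero ?(ltnW ik) // subr0 hi; apply.
move=> w /andP[w0 wz]; apply: IH; [exact: ltnW | by rewrite w0 (le_trans wz)].
Qed.

Lemma mono_prop y : (forall z, 0 <= z <= y -> 0 <= F k z) ->
  forall j x z, (j < k)%N -> 0 <= x -> x <= z -> z <= y -> F j x <= F j z.
Proof.
move=> Hk j x z jk x0 xz zy.
have := @mvt_ge _ (F j) (F j.+1) x z 0 (fun w => hd _ w jk) xz.
rewrite mul0r subr_ge0; apply => w /andP[w1 w2].
by apply: (@pos_prop y Hk j.+1 jk w); rewrite (le_trans x0 w1) (le_trans w2 zy).
Qed.

Hypothesis hp : forall x, 0 < x < 1 -> 0 < F 0 x.

Lemma Fk_pos d0 : d0 <= 1 -> (forall x, 0 < x < d0 -> F k x != 0) ->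
  forall z, 0 <= z < d0 -> 0 <= F k z.
Proof.
move=> d01 Hnz z /andP[z0 zd]; rewrite leNgt; apply/negP => Fz.
have zpos : 0 < z.
  rewrite lt_neqAle z0 andbT; apply/negP => /eqP z0'.
  by move: Fz; rewrite -z0' Fzero // ltxx.
have Hneg : forall w, 0 <= w <= z -> F k w <= 0.
  move=> w /andP[w0 wz]; rewrite leNgt; apply/negP => Fw.
  have wpos : 0 < w.
    rewrite lt_neqAle w0 andbT; apply/negP => /eqP w0'.
    by move: Fw; rewrite -w0' Fzero // ltxx.
  have Hv : Num.min (F k w) (F k z) <= 0 <= Num.max (F k w) (F k z).
    by rewrite ge_min le_max (ltW Fz) (ltW Fw) orbT.
  have [c /andP[c1 c2] Fc] := IVT wz (continuous_subspaceT hc) Hv.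
  rewrite !bnd_simp in c1 c2.
  by move: (Hnz c); rewrite Fc eqxx (lt_le_trans wpos c1) (le_lt_trans c2 zd) => /(_ isT).
have := @neg_prop z Hneg 0 (leq0n k) z; rewrite z0 lexx => /(_ isT).
by rewrite leNgt hp // zpos (lt_le_trans zd d01).
Qed.

Lemma endpoint n (a : R) : (exists2 d0 : R, 0 < d0 & forall x, 0 < x < d0 -> F k x != 0) ->
  (n.+1 < k)%N -> 0 <= a -> a * (k.-1)%:R <= (k.-1 - n)%:R ->
  exists d : R, [/\ 0 < d, d < 1 & exists C, forall t, 0 < t <= d -> `|F n t| <= C * F 0 t `^ a].
Proof.
move=> [d0 d00 Hnz] nk a0 aK.
set d1 := Num.min d0 1.
have d10 : 0 < d1 by rewrite lt_min d00 ltr01.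
have d11 : d1 <= 1 by rewrite ge_min lexx orbT.
have d1d0 : d1 <= d0 by rewrite ge_min lexx.
set d := d1 / 2.
have d0' : 0 < d by rewrite divr_gt0.
have dd1 : d < d1 by rewrite /d ltr_pdivrMr // ltr_pMr // ltr1n.
have Hkp : forall z, 0 <= z <= d -> 0 <= F k z.
  move=> z /andP[z0 zd]; apply: (@Fk_pos d1) => //.
    by move=> x /andP[x0 xd]; apply: Hnz; rewrite x0 (lt_le_trans xd d1d0).
  by rewrite z0 (le_lt_trans zd dd1).
have k0 : (0 < k)%N by apply: leq_trans nk.
have hd' : forall j (x : R), (j < k.-1)%N -> is_derive x 1 (F j) (F j.+1 x).
  by move=> j x jk; apply: hd; apply: (leq_trans jk); rewrite leq_pred.
have hpos' : forall j x, (j <= k.-1)%N -> 0 <= x <= d -> 0 <= F j x.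
  by move=> j x jk; apply: (@pos_prop d Hkp j _ x); apply: (leq_trans jk); rewrite leq_pred.
have hmono' : forall j x y, (j <= k.-1)%N -> 0 <= x -> x <= y -> y <= d -> F j x <= F j y.
  by move=> j x y jk; apply: (@mono_prop d Hkp j x y); rewrite (leq_ltn_trans jk) // ltn_predL.
have h0' : forall j, (j <= k.-1)%N -> F j 0 = 0.
  by move=> j jk; apply: Fzero; apply: (leq_trans jk); rewrite leq_pred.
have hK : (0 < k.-1)%N by rewrite -ltnS prednK // (leq_ltn_trans _ nk).
have nK : (n < k.-1)%N by rewrite -ltnS prednK.
have [C HC] := @core_est R F k.-1 d hd' hpos' hmono' h0' hK n nK a a0 aK.
exists d; split => //; first by apply: lt_le_trans dd1 d11.
exists C => t /andP[t0 td].
have Ft : 0 < F 0 t by apply: hp; rewrite t0 (le_lt_trans td (lt_le_trans dd1 d11)).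
rewrite ger0_norm; first by apply: HC => //; rewrite t0.
apply: hpos' => //; last by rewrite (ltW t0).
by rewrite -ltnS prednK // ltnW.
Qed.
End End.

Section M.
Context {R : realType}.

Lemma uc_cont (f : R -> R) : unif_continuous f -> continuous f.
Proof.
move=> /unif_continuousP H x; apply/cvgrPdist_lt => e e0.
have [d d0 Hd] := H e e0.
by exists d => //= y xy; have := Hd (x, y) xy.
Qed.

Lemma isd_1m (x : R) : is_derive x 1 (fun y : R => 1 - y) (-1).
Proof.
have H : is_derive x 1 (fun y : R => 1 - y) (0 - 1) by apply: is_deriveB.
by rewrite sub0r in H.
Qed.

Lemma refl_isd (f : R -> R) df (x : R) :
  is_derive (1 - x) 1 f df -> is_derive x 1 (fun y => f (1 - y)) (- df).
Proof.
move=> hf.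
have dg : derivable (fun y : R => 1 - y) x 1 by exact: (@ex_derive _ _ _ _ _ _ _ (isd_1m x)).
have df' : derivable f (1 - x) 1 by exact: (@ex_derive _ _ _ _ _ _ _ hf).
apply: DeriveDef.
  apply/derivable1_diffP; apply: (@differentiable_comp _ _ _ _ (fun y : R => 1 - y) f).
    exact/derivable1_diffP.
  exact/derivable1_diffP.
rewrite -derive1E (@derive1_comp _ (fun y : R => 1 - y) f x dg df').
rewrite !derive1E (derive_val (is_derive:=isd_1m x)) (derive_val (is_derive:=hf)).
by rewrite mulrN1.
Qed.

Lemma measurable_inv : measurable_fun [set: R] (@GRing.inv R).
Proof.
have -> : [set: R] = [set 0] `|` ~` [set 0].
  by rewrite setUv.
apply/measurable_funU => //; first exact: measurableC.
split; first exact: measurable_fun_set1.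
apply: measurable_realfun.open_continuous_measurable_fun.
  by apply: closed_openC; apply: accessible_closed_set1; apply: hausdorff_accessible; exact: Rhausdorff.
by move=> x; rewrite inE => /eqP x0; apply: inv_continuous.
Qed.

Lemma meas_ratio (f g : R -> R) (a : R) : continuous f -> continuous g ->
  measurable_fun (`[0, 1]%classic : set R) (fun t => `|f t| / (`|g t| `^ a)).
Proof.
move=> cf cg.
apply: (@measurable_funS _ _ _ _ [set: R]) => //.
apply: measurable_realfun.measurable_funM.
  apply: measurable_realfun.continuous_measurable_fun => x.
  exact: (continuous_comp (cf x) (@norm_continuous _ R^o (f x))).
apply: (measurableT_comp measurable_inv).
apply: (measurableT_comp (measurable_realfun.measurable_powR a)).
apply: measurable_realfun.continuous_measurable_fun => x.
exact: (continuous_comp (cg x) (@norm_continuous _ R^o (g x))).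
Qed.
End M.

Section I.
Context {R : realType}.

Lemma fin_sep (A : set R) (c : R) : finite_set A ->
  exists2 d, 0 < d & forall x, A x -> x != c -> d <= `|x - c|.
Proof.
move=> /finite_seqP [s ->]; elim: s => [|y s [d d0 Hd]].
  by exists 1 => // x /=; rewrite in_nil.
case: (eqVneq y c) => [->|yc].
  exists d => // x /=; rewrite in_cons => /orP[/eqP->|xs]; first by rewrite eqxx.
  exact: Hd.
exists (Num.min d `|y - c|); first by rewrite lt_min d0 normr_gt0 subr_eq0.
move=> x /=; rewrite in_cons => /orP[/eqP->|xs] xc; first by rewrite ge_min lexx orbT.
by rewrite ge_min Hd.
Qed.

Lemma nderiv_isd (phi : R -> R) j x : derivable (nderiv j phi) x 1 ->
  is_derive x 1 (nderiv j phi) (nderiv j.+1 phi x).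
Proof. by move=> h; rewrite /nderiv derive1nS derive1E; exact: derivableP. Qed.

Lemma supp_zero (phi : R -> R) x : supp phi `<=` (`[0, 1]%classic : set R) ->
  (x < 0 \/ 1 < x) -> phi x = 0.
Proof.
move=> hs hx; apply/eqP; apply/negP => /negP px.
have : supp phi x by apply: subset_closure.
move/hs; rewrite /= in_itv /= => /andP[x0 x1].
by case: hx; lra.
Qed.
End I.

Lemma exps_ok (R : realType) (p : \bar R) (m k n : nat) :
  (1 < p)%E -> k_condition k m p -> (n <= m)%N ->
  [/\ (n.+1 < k)%N, 0 <= inv_exponent p & inv_exponent p * (k.-1)%:R <= (k.-1 - n)%:R].
Proof.
case: p => [r| |] //= r1 hk nm; last first.
  by rewrite mul0r ler0n; split => //; apply: leq_ltn_trans hk; rewrite ltnS.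
rewrite lte_fin in r1.
have r0 : 0 < r by lra.
have r10 : 0 < r - 1 by lra.
have NM : (n%:R <= m%:R :> R) by rewrite ler_nat.
have Hm : m%:R * r < (k%:R - 1) * (r - 1).
  rewrite -ltr_pdivrMr // ; lra.
have M0 : (0 <= m%:R :> R) by [].
have mk : (m%:R + 1 < k%:R :> R).
  have : m%:R <= m%:R * r / (r - 1).
    rewrite ler_pdivlMr // ; nra.
  lra.
have nk : (n.+1 < k)%N by rewrite -(ltr_nat R) -addn1 natrD; lra.
have k0 : (0 < k)%N by apply: leq_trans nk.
have nk' : (n <= k.-1)%N by rewrite -ltnS prednK // ltnW.
split => //; first by rewrite invr_ge0 ltW.
have kR : ((k.-1)%:R = k%:R - 1 :> R) by rewrite -subn1 natrB.
rewrite natrB // kR.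
rewrite -[X in _ <= X](mulKf (lt0r_neq0 r0)) ler_pM2l ?invr_gt0 //.
nra.
Qed.

Section G.
Context {R : realType}.

Lemma G_isd (f : nat -> R -> R) k :
  (forall j (x : R), (j < k)%N -> is_derive x 1 (f j) (f j.+1 x)) ->
  forall j (x : R), (j < k)%N ->
  is_derive x 1 (fun y => (-1) ^+ j * f j (1 - y)) ((-1) ^+ j.+1 * f j.+1 (1 - x)).
Proof.
move=> hd j x jk.
have h := @refl_isd R (f j) (f j.+1 (1 - x)) x (hd j (1 - x) jk).
have h2 := is_deriveZ ((-1) ^+ j : R) h.
have -> : (-1) ^+ j.+1 * f j.+1 (1 - x) = (-1) ^+ j *: - f j.+1 (1 - x).
  by rewrite exprS mulN1r mulNr scalerN.
by apply: is_derive_eq.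
Qed.

Lemma G_cont (g : R -> R) (c : R) : continuous g -> continuous (fun y : R => c * g (1 - y)).
Proof.
move=> cg x; apply: continuousM; first exact: cst_continuous.
have h1 : {for x, continuous (fun y : R => 1 - y)}.
  apply: continuousB; [exact: cst_continuous | exact: cvg_id].
exact: (continuous_comp h1 (cg (1 - x))).
Qed.
End G.

Theorem lemma4p5 (R : realType) (p : \bar R) (m k : nat) (phi : R -> R) :
  (1 < p)%E ->
  C0k k phi ->
  supp phi `<=` (`[0, 1]%classic : set R) ->
  (forall t, 0 < t < 1 -> 0 < phi t) ->
  k_condition k m p ->
  finite_set [set t | (`[0, 1]%classic : set R) t /\ nderiv k phi t = 0] ->
  forall n : nat, (n <= m)%N ->
    Linfty01 (fun t => `|nderiv n phi t| / (`|phi t| `^ inv_exponent p)).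
Proof.
move=> p1 [_ [hder huc]] hsupp hpos hkc hfin n nm.
have [nk a0 aK] := @exps_ok R p m k n p1 hkc nm.
set a := inv_exponent p in a0 aK *.
set f := fun j => nderiv j phi.
have k0 : (0 < k)%N by apply: leq_trans nk.
have hd : forall j (x : R), (j < k)%N -> is_derive x 1 (f j) (f j.+1 x).
  by move=> j x jk; apply: nderiv_isd; apply: hder.
have hc : continuous (f k) by apply: uc_cont; apply: huc.
have fc j : (j <= k)%N -> continuous (f j) by move=> jk; apply: uc_cont; apply: huc.
have f0 : f 0%N = phi by [].
have hz : forall x, x < 0 -> f 0%N x = 0.
  by move=> x x0; apply: supp_zero => //; left.
have hp : forall x, 0 < x < 1 -> 0 < f 0%N x by [].
have [d0 d00 Hd0] := @fin_sep R _ 0 hfin.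
have [d1 d10 Hd1] := @fin_sep R _ 1 hfin.
have hnz : exists2 d, 0 < d & forall x, 0 < x < d -> f k x != 0.
  exists (Num.min d0 1); first by rewrite lt_min d00 ltr01.
  move=> x /andP[x0 xd]; apply/negP => /eqP fx.
  rewrite lt_min in xd; case/andP: xd => xd0 x1.
  have := Hd0 x; rewrite subr0 gtr0_norm // => /(_ _ (lt0r_neq0 x0)).
  have : (`[0, 1]%classic : set R) x by rewrite /= in_itv /= !ltW.
  by move=> xI /(_ (conj xI fx)); rewrite leNgt xd0.
have [e1 [e10 e11 [C1 HC1]]] := @endpoint R f k hd hc hz hp n a hnz nk a0 aK.
set G := fun j (y : R) => (-1) ^+ j * f j (1 - y).
have hdG : forall j (x : R), (j < k)%N -> is_derive x 1 (G j) (G j.+1 x).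
  exact: G_isd hd.
have hcG : continuous (G k) by apply: G_cont.
have G0 y : G 0%N y = phi (1 - y) by rewrite /G expr0 mul1r.
have hzG : forall x, x < 0 -> G 0%N x = 0.
  by move=> x x0; rewrite G0; apply: supp_zero => //; right; lra.
have hpG : forall x, 0 < x < 1 -> 0 < G 0%N x.
  by move=> x /andP[x0 x1]; rewrite G0; apply: hpos; apply/andP; split; lra.
have hnzG : exists2 d, 0 < d & forall x, 0 < x < d -> G k x != 0.
  exists (Num.min d1 1); first by rewrite lt_min d10 ltr01.
  move=> x /andP[x0 xd]; rewrite /G mulf_eq0 negb_or signr_eq0 /=.
  apply/negP => /eqP fx.
  rewrite lt_min in xd; case/andP: xd => xd0 x1.
  have := Hd1 (1 - x).
  have -> : 1 - x - 1 = - x by ring.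
  rewrite normrN gtr0_norm // => /(_ _ _).
  have xn : 1 - x != 1 by rewrite subr_eq addrC -subr_eq subrr eq_sym gt_eqF.
  have : (`[0, 1]%classic : set R) (1 - x) by rewrite /= in_itv /=; apply/andP; split; lra.
  by move=> xI /(_ (conj xI fx) xn); rewrite leNgt xd0.
have [e2 [e20 e21 [C2 HC2]]] := @endpoint R G k hdG hcG hzG hpG n a hnzG nk a0 aK.
set b1 := Num.min e1 (1 / 2); set b2 := Num.min e2 (1 / 2).
have b10 : 0 < b1 by rewrite lt_min e10 /=; lra.
have b20 : 0 < b2 by rewrite lt_min e20 /=; lra.
have b1h : b1 <= 1 / 2 by rewrite ge_min lexx orbT.
have b2h : b2 <= 1 / 2 by rewrite ge_min lexx orbT.
have b1e : b1 <= e1 by rewrite ge_min lexx.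
have b2e : b2 <= e2 by rewrite ge_min lexx.
have cphi : continuous phi by rewrite -f0; apply: fc.
have [c cI cmin] := @EVT_min R phi b1 (1 - b2) (ltac:(lra)) (continuous_subspaceT cphi).
have phic : 0 < phi c.
  by apply: hpos; move: cI; rewrite in_itv /= => /andP[? ?]; apply/andP; split; lra.
have cfn : continuous (fun t => `|f n t|).
  move=> x; apply: (continuous_comp (fc n _ x) (@norm_continuous _ R^o (f n x))).
  by apply: ltnW; apply: ltnW.
have [cm cmI cmax] := @EVT_max R (fun t => `|f n t|) 0 1 ler01 (continuous_subspaceT cfn).
set B := `|f n cm|.
have B0 : 0 <= B by rewrite /B normr_ge0.
have Pc0 : 0 < phi c `^ a by apply: powR_gt0.
split.
  apply: meas_ratio => //; apply: fc; apply: ltnW; apply: ltnW; exact: nk.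
exists (`|C1| + `|C2| + B / phi c `^ a + B).
apply: aeW => t /=; rewrite in_itv /= => /andP[t0 t1].
have Bt : `|f n t| <= B by apply: cmax; rewrite in_itv /= t0 t1.
have gge : 0 <= `|f n t| / `|phi t| `^ a by apply: divr_ge0; [exact: normr_ge0 | exact: powR_ge0].
rewrite ger0_norm //.
have T0 : 0 <= `|C1| + `|C2| + B / phi c `^ a by rewrite !addr_ge0 // divr_ge0 // ltW.
have Tle x : x <= B -> x <= `|C1| + `|C2| + B / phi c `^ a + B.
  by move=> xB; apply: le_trans xB _; rewrite lerDr.
have zero_case : phi t = 0 -> `|f n t| / `|phi t| `^ a <= `|C1| + `|C2| + B / phi c `^ a + B.
  move=> ->; rewrite normr0; case: (eqVneq a 0) => [a0'|an0].
    by rewrite [X in 0 `^ X]a0' powRr0 divr1; apply: Tle.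
  by rewrite powR0 // invr0 mulr0 addr_ge0.
case: (eqVneq t 0) => [te|tn0].
  by apply: zero_case; rewrite te -f0; apply: (@Fzero R f k hd hc hz).
case: (eqVneq t 1) => [te|tn1].
  apply: zero_case; rewrite te.
  by have := @Fzero R G k hdG hcG hzG 0%N (leq0n _); rewrite G0 subr0.
have t0' : 0 < t by rewrite lt_neqAle eq_sym tn0.
have t1' : t < 1 by rewrite lt_neqAle tn1.
have pt : 0 < phi t by apply: hpos; rewrite t0' t1'.
rewrite [`|phi t|]gtr0_norm //.
have Pt : 0 < phi t `^ a by apply: powR_gt0.
rewrite ler_pdivrMr //.
have [tb1|tb1] := leP t b1.
  have := HC1 t; rewrite t0' (le_trans tb1 b1e) => /(_ isT) H.
  apply: le_trans H _; rewrite ler_wpM2r ?powR_ge0 //.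
  have nC1 := ler_norm C1; have nC2 := normr_ge0 C2; have nC1' := normr_ge0 C1.
  have h3 : 0 <= B / phi c `^ a by rewrite divr_ge0 // ltW.
  lra.
have [tb2|tb2] := leP (1 - b2) t.
  have x0 : 0 < 1 - t by lra.
  have := HC2 (1 - t); rewrite x0 /= => /(_ _).
  rewrite G0 /G normrM normrX normrN1 expr1n mul1r !subKr => /(_ ltac:(lra)) H.
  apply: le_trans H _; rewrite ler_wpM2r ?powR_ge0 //.
  have nC1 := ler_norm C2; have nC2 := normr_ge0 C2; have nC1' := normr_ge0 C1.
  have h3 : 0 <= B / phi c `^ a by rewrite divr_ge0 // ltW.
  lra.
have pct : phi c `^ a <= phi t `^ a.
  apply: ge0_ler_powR => //; rewrite ?nnegrE; try by apply: ltW.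
  by apply: cmin; rewrite in_itv /=; apply/andP; split; apply: ltW.
have H1 : `|f n t| <= B / phi c `^ a * phi t `^ a.
  rewrite mulrAC ler_pdivlMr //; apply: ler_pM => //.
  by apply: ltW.
apply: le_trans H1 _; apply: ler_wpM2r; first exact: powR_ge0.
have nC2 := normr_ge0 C2; have nC1 := normr_ge0 C1; lra.
Qed.
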